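(* Let $f:\mathbb{R}^{n_0}\to\mathbb{R}^{n_m}$ be an $m$-layer ReLU network with weights $\mathbf{W}^{(k)}\in\mathbb{R}^{n_k\times n_{k-1}}$ and biases $\bm{b}^{(k)}\in\mathbb{R}^{n_k}$, $k\in[m]$, let $\bm{x}_0\in\mathbb{R}^{n_0}$, $p\in[1,\infty]$, $\epsilon>0$, and let $\bm{l}^{(k)},\bm{u}^{(k)}\in\mathbb{R}^{n_k}$, $k\in[m-1]$, be lower and upper bounds on the pre-ReLU activations valid on $B_p(\bm{x}_0,\epsilon)$. Let $f^U,f^L:\mathbb{R}^{n_0}\to\mathbb{R}^{n_m}$ be the functions defined below. Then for all $j\in[n_m]$ and all $\bm{x}\in B_p(\bm{x}_0,\epsilon)$, $$f^L_j(\bm{x})\le f_j(\bm{x})\le f^U_j(\bm{x}).$$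
   Context: Network: $\phi_0(\bm{x})=\bm{x}$; for $k\in[m-1]$, $\phi_k(\bm{x})=\sigma(\mathbf{W}^{(k)}\phi_{k-1}(\bm{x})+\bm{b}^{(k)})$ with $\sigma(\bm{y})=\max(\bm{y},\bm{0})$ elementwise; $f(\bm{x})=\mathbf{W}^{(m)}\phi_{m-1}(\bm{x})+\bm{b}^{(m)}$, $f_j$ its $j$-th coordinate. $B_p(\bm{x}_0,\epsilon)=\{\bm{x}:\|\bm{x}-\bm{x}_0\|_p\le\epsilon\}$. Standing assumption: for each $k\in[m-1]$, $r\in[n_k]$, $\bm{l}^{(k)}_r\le\bm{u}^{(k)}_r$ and $\bm{l}^{(k)}_r\le \mathbf{W}^{(k)}_{r,:}\phi_{k-1}(\bm{x})+\bm{b}^{(k)}_r\le\bm{u}^{(k)}_r$ for all $\bm{x}\in B_p(\bm{x}_0,\epsilon)$. Index sets: $\mathcal{I}^+_k=\{r\in[n_k]:\bm{u}^{(k)}_r\ge\bm{l}^{(k)}_r\ge0\}$, $\mathcal{I}^-_k=\{r:\bm{l}^{(k)}_r\le\bm{u}^{(k)}_r\le 0\}$, $\mathcal{I}_k=\{r:\bm{l}^{(k)}_r<0<\bm{u}^{(k)}_r\}$. Let $\mathbf{D}^{(0)}=I_{n_0}$ and for $k\in[m-1]$ let $\mathbf{D}^{(k)}$ be the $n_k\times n_k$ diagonal matrix with $\mathbf{D}^{(k)}_{r,r}=\frac{\bm{u}^{(k)}_r}{\bm{u}^{(k)}_r-\bm{l}^{(k)}_r}$ if $r\in\mathcal{I}_k$,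 $1$ if $r\in\mathcal{I}^+_k$, $0$ if $r\in\mathcal{I}^-_k$. Let $\mathbf{A}^{(m-1)}=\mathbf{W}^{(m)}\mathbf{D}^{(m-1)}\in\mathbb{R}^{n_m\times n_{m-1}}$ and, for $k=m-1,m-2,\dots,1$, $\mathbf{A}^{(k-1)}=\mathbf{A}^{(k)}\mathbf{W}^{(k)}\mathbf{D}^{(k-1)}\in\mathbb{R}^{n_m\times n_{k-1}}$. For $k\in[m-1]$ define $\mathbf{T}^{(k)},\mathbf{H}^{(k)}\in\mathbb{R}^{n_k\times n_m}$ by $\mathbf{T}^{(k)}_{r,j}=\bm{l}^{(k)}_r$ if $r\in\mathcal{I}_k$ and $\mathbf{A}^{(k)}_{j,r}>0$, else $0$; $\mathbf{H}^{(k)}_{r,j}=\bm{l}^{(k)}_r$ if $r\in\mathcal{I}_k$ and $\mathbf{A}^{(k)}_{j,r}<0$, else $0$. Then $f^U_j(\bm{x})=\mathbf{A}^{(0)}_{j,:}\bm{x}+\bm{b}^{(m)}_j+\sum_{k=1}^{m-1}\mathbf{A}^{(k)}_{j,:}(\bm{b}^{(k)}-\mathbf{T}^{(k)}_{:,j})$ and $f^L_j(\bm{x})=\mathbf{A}^{(0)}_{j,:}\bm{x}+\bm{b}^{(m)}_j+\sum_{k=1}^{m-1}\mathbf{A}^{(k)}_{j,:}(\bm{b}^{(k)}-\mathbf{H}^{(k)}_{:,j})$. *)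

(* Defs.v *)
From HB Require Import structures.
From mathcomp Require Import all_boot all_order all_algebra.
From mathcomp Require Import reals constructive_ereal ereal exp.
Set Implicit Arguments. Unset Strict Implicit. Unset Printing Implicit Defensive.
Import Order.TTheory GRing.Theory Num.Theory.
Local Open Scope ring_scope.

Section Network.
Variable R : realType.

Definition lpnorm (p : \bar R) (d : nat) (v : 'cV[R]_d) : R :=
  match p with
  | +oo%E => \big[Num.max/0]_(i < d) `|v i 0|
  | (q%:E)%E => (\sum_(i < d) `|v i 0| `^ q) `^ q^-1
  | -oo%E => 0
  end.

Definition relu (d : nat) (y : 'cV[R]_d) : 'cV[R]_d := map_mx (fun t => Num.max t 0) y.

Variable n : nat -> nat.
Variable W : forall k : nat, 'M[R]_(n k, n k.-1).
Variable b : forall k : nat, 'cV[R]_(n k).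

Fixpoint phi (x : 'cV[R]_(n 0%N)) (k : nat) : 'cV[R]_(n k) :=
  match k with
  | 0 => x
  | k'.+1 => relu (W k'.+1 *m phi x k' + b k'.+1)
  end.

Definition preact (x : 'cV[R]_(n 0%N)) (k : nat) : 'cV[R]_(n k) :=
  W k *m phi x k.-1 + b k.

Definition net (m : nat) (x : 'cV[R]_(n 0%N)) : 'cV[R]_(n m) :=
  W m *m phi x m.-1 + b m.

Variables l u : forall k : nat, 'cV[R]_(n k).

(* D^(k)_{r,r} for k >= 1: I_k (l<0<u) -> u/(u-l); I+_k (0<=l) -> 1; otherwise (I-_k) -> 0 *)
Definition dcoef (lr ur : R) : R :=
  if (lr < 0) && (0 < ur) then ur / (ur - lr)
  else if 0 <= lr then 1 else 0.

Definition Dmat (k : nat) : 'M[R]_(n k) :=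
  \matrix_(r, s) (if r == s then (if k == 0%N then 1 else dcoef (l k r 0) (u k r 0)) else 0).

(* generic "identity-shaped" matrix of type 'M_(n i, n k); it is the identity when i = k *)
Definition idg (i k : nat) : 'M[R]_(n i, n k) := \matrix_(r, s) ((nat_of_ord r == nat_of_ord s)%:R).

(* P k i = D^(i) W^(i) D^(i-1) W^(i-1) ... D^(k+1) W^(k+1)  (for i >= k; P k k = I) *)
Fixpoint Pchain (k i : nat) : 'M[R]_(n i, n k) :=
  match i with
  | 0 => idg 0%N k
  | i'.+1 => if (k <= i')%N then Dmat i'.+1 *m W i'.+1 *m Pchain k i' else idg i'.+1 k
  end.

(* A^(k) = W^(m) D^(m-1) W^(m-1) ... W^(k+1) D^(k), i.e. the unrolled recursion
   A^(m-1) = W^(m) D^(m-1),  A^(k-1) = A^(k) W^(k) D^(k-1). *)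
Definition Amat (m k : nat) : 'M[R]_(n m, n k) := W m *m Pchain k m.-1 *m Dmat k.

Definition in_I (k : nat) (r : 'I_(n k)) : bool := (l k r 0 < 0) && (0 < u k r 0).

Definition Tmat (m k : nat) : 'M[R]_(n k, n m) :=
  \matrix_(r, j) (if in_I r && (0 < Amat m k j r) then l k r 0 else 0).

Definition Hmat (m k : nat) : 'M[R]_(n k, n m) :=
  \matrix_(r, j) (if in_I r && (Amat m k j r < 0) then l k r 0 else 0).

Definition fU (m : nat) (j : 'I_(n m)) (x : 'cV[R]_(n 0%N)) : R :=
  (row j (Amat m 0) *m x) 0 0 + b m j 0
  + \sum_(1 <= k < m) (row j (Amat m k) *m (b k - col j (Tmat m k))) 0 0.

Definition fL (m : nat) (j : 'I_(n m)) (x : 'cV[R]_(n 0%N)) : R :=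
  (row j (Amat m 0) *m x) 0 0 + b m j 0
  + \sum_(1 <= k < m) (row j (Amat m k) *m (b k - col j (Hmat m k))) 0 0.

End Network.

(* Main.v *)
Require Import Defs.
From HB Require Import structures.
From mathcomp Require Import all_boot all_order all_algebra.
From mathcomp Require Import reals constructive_ereal ereal exp.
From mathcomp Require Import ring lra zify.
Import Order.TTheory GRing.Theory Num.Theory.
Local Open Scope ring_scope.

Lemma maxcase (R : realType) (y : R) :
  (0 <= y /\ Num.max y 0 = y) \/ (y < 0 /\ Num.max y 0 = 0).
Proof.
have [hy|hy] := leP 0 y; [left; split=>//; rewrite max_l // | right; split=>//; rewrite max_r // ltW //].
Qed.

Lemma relu_I (R : realType) (l u y : R) : l < 0 -> 0 < u -> l <= y -> y <= u ->
  [/\ 0 < dcoef l u, dcoef l u * y <= Num.max y 0 & Num.max y 0 <= dcoef l u * (y - l)].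
Proof.
move=> hl hu hly hyu; rewrite /dcoef hl hu /=.
have hul : 0 < u - l by lra.
set D := u / (u - l).
have hD : D * (u - l) = u by rewrite /D; field; lra.
have hD0 : 0 < D by rewrite /D divr_gt0.
have [[hy ->]|[hy ->]] := maxcase _ y; split => //; nra.
Qed.

Lemma relu_nI (R : realType) (l u y : R) : ~~ ((l < 0) && (0 < u)) -> l <= y -> y <= u ->
  Num.max y 0 = dcoef l u * y.
Proof.
move=> hI hly hyu; rewrite /dcoef (negbTE hI).
have : u <= 0 \/ 0 <= l by move: hI; case: (ltP l 0); case: (ltP 0 u) => //=; lra.
case: ifP => h0 [h|h].
- have [[hy ->]|[hy ->]] := maxcase _ y; lra.
- have [[hy ->]|[hy ->]] := maxcase _ y; lra.
- have [[hy ->]|[hy ->]] := maxcase _ y; lra.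
- by rewrite h in h0.
Qed.

Lemma pt_up (R : realType) (l u y c : R) : l <= y -> y <= u ->
  c * Num.max y 0 <= c * dcoef l u * (y - (if ((l < 0) && (0 < u)) && (0 < c * dcoef l u) then l else 0)).
Proof.
move=> hly hyu.
case hI: ((l < 0) && (0 < u)); last first.
  by rewrite /= subr0 (@relu_nI _ _ _ _ (negbT hI)) // mulrA.
move/andP: hI => [hl hu]; have [hD h1 h2] := @relu_I _ _ _ _ hl hu hly hyu.
rewrite /= pmulr_lgt0 //.
case: (ltP 0 c) => hc; first by rewrite -mulrA ler_pM2l.
rewrite subr0 -mulrA; exact: ler_wnM2l.
Qed.

Lemma pt_lo (R : realType) (l u y c : R) : l <= y -> y <= u ->
  c * dcoef l u * (y - (if ((l < 0) && (0 < u)) && (c * dcoef l u < 0) then l else 0)) <= c * Num.max y 0.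
Proof.
move=> hly hyu.
case hI: ((l < 0) && (0 < u)); last first.
  by rewrite /= subr0 (@relu_nI _ _ _ _ (negbT hI)) // mulrA.
move/andP: hI => [hl hu]; have [hD h1 h2] := @relu_I _ _ _ _ hl hu hly hyu.
rewrite /= pmulr_llt0 //.
case: (ltP c 0) => hc; first by rewrite -mulrA ler_wnM2l // ltW.
rewrite subr0 -mulrA; exact: ler_wpM2l.
Qed.
Section S.
Variable R : realType.
Variable n : nat -> nat.
Variable W : forall k : nat, 'M[R]_(n k, n k.-1).
Variables l u : forall k : nat, 'cV[R]_(n k).

Lemma idg_id i : idg R n i i = 1%:M.
Proof. by apply/matrixP => r s; rewrite !mxE. Qed.

Lemma Pchain_id k : Pchain W l u k k = 1%:M.
Proof. by case: k => [|k] /=; rewrite ?ltnn idg_id. Qed.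

Lemma Pchain_step k i : (0 < k)%N -> (k <= i)%N ->
  Pchain W l u k.-1 i = Pchain W l u k i *m Dmat l u k *m W k.
Proof.
move=> k0; elim: i => [|i IH] hki; first by case: k k0 hki.
rewrite /= (_ : (k.-1 <= i)%N); last by rewrite -ltnS prednK.
case: (ltngtP k i.+1) hki => // [hlt|->] _.
  by rewrite ltnS in hlt; rewrite hlt IH // !mulmxA.
rewrite ltnn.
by rewrite (Pchain_id i) idg_id mulmx1 mul1mx.
Qed.
Variable b : forall k : nat, 'cV[R]_(n k).
Variable m : nat.
Variable x : 'cV[R]_(n 0%N).
Variable j : 'I_(n m).
Hypothesis Hb : forall k, (0 < k < m)%N -> forall r : 'I_(n k),
  l k r 0 <= preact W b x k r 0 <= u k r 0.

Lemma rowD k (c : 'rV[R]_(n k)) (r : 'I_(n k)) (hk : (0 < k)%N) :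
  (c *m Dmat l u k) 0 r = c 0 r * dcoef (l k r 0) (u k r 0).
Proof.
rewrite mxE (bigD1 r) //= big1 ?addr0.
  by rewrite mxE eqxx; case: k hk c r.
by move=> s /negbTE hs; rewrite mxE hs mulr0.
Qed.

Lemma step_up k : (k.+1 < m)%N ->
  (row j (W m *m Pchain W l u k.+1 m.-1) *m phi W b x k.+1) 0 0 <=
  (row j (W m *m Pchain W l u k m.-1) *m phi W b x k) 0 0 +
  (row j (Amat W l u m k.+1) *m (b k.+1 - col j (Tmat W l u m k.+1))) 0 0.
Proof.
move=> hk.
set c := row j (W m *m Pchain W l u k.+1 m.-1).
have ha : row j (Amat W l u m k.+1) = c *m Dmat l u k.+1 by rewrite /Amat row_mul.
have hc : row j (W m *m Pchain W l u k m.-1) = c *m Dmat l u k.+1 *m W k.+1.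
  have := @Pchain_step k.+1 m.-1 isT; rewrite /= => ->; last by rewrite -ltnS prednK // (ltn_trans _ hk).
  by rewrite /c !mulmxA !row_mul.
rewrite hc ha.
have -> : (c *m Dmat l u k.+1 *m W k.+1 *m phi W b x k) 0 0 + (c *m Dmat l u k.+1 *m (b k.+1 - col j (Tmat W l u m k.+1))) 0 0
   = ((c *m Dmat l u k.+1) *m (W k.+1 *m phi W b x k + b k.+1 - col j (Tmat W l u m k.+1))) 0 0.
  by rewrite -[in RHS]addrA [in RHS]mulmxDr [in RHS]mulmxA [in RHS]mxE.
rewrite [X in _ <= X]mxE [X in X <= _]mxE; apply: ler_sum => r _.
rewrite rowD //.
have -> : phi W b x k.+1 r 0 = Num.max (preact W b x k.+1 r 0) 0 by rewrite /= mxE.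
have -> : (W k.+1 *m phi W b x k + b k.+1 - col j (Tmat W l u m k.+1)) r 0
   = preact W b x k.+1 r 0 - col j (Tmat W l u m k.+1) r 0 by rewrite /preact !mxE.
have -> : col j (Tmat W l u m k.+1) r 0 = if in_I l u r && (0 < (c *m Dmat l u k.+1) 0 r) then l k.+1 r 0 else 0.
  have eA : Amat W l u m k.+1 j r = (c *m Dmat l u k.+1) 0 r.
    by rewrite -ha [RHS]mxE.
  by rewrite mxE /Tmat mxE eA.
rewrite rowD //.
have [h1 h2] := andP (Hb (k.+1) hk r).
exact: pt_up.
Qed.
Lemma step_lo k : (k.+1 < m)%N ->
  (row j (W m *m Pchain W l u k m.-1) *m phi W b x k) 0 0 +
  (row j (Amat W l u m k.+1) *m (b k.+1 - col j (Hmat W l u m k.+1))) 0 0 <=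
  (row j (W m *m Pchain W l u k.+1 m.-1) *m phi W b x k.+1) 0 0.
Proof.
move=> hk.
set c := row j (W m *m Pchain W l u k.+1 m.-1).
have ha : row j (Amat W l u m k.+1) = c *m Dmat l u k.+1 by rewrite /Amat row_mul.
have hc : row j (W m *m Pchain W l u k m.-1) = c *m Dmat l u k.+1 *m W k.+1.
  have := @Pchain_step k.+1 m.-1 isT; rewrite /= => ->; last by rewrite -ltnS prednK // (ltn_trans _ hk).
  by rewrite /c !mulmxA !row_mul.
rewrite hc ha.
have -> : (c *m Dmat l u k.+1 *m W k.+1 *m phi W b x k) 0 0 + (c *m Dmat l u k.+1 *m (b k.+1 - col j (Hmat W l u m k.+1))) 0 0
   = ((c *m Dmat l u k.+1) *m (W k.+1 *m phi W b x k + b k.+1 - col j (Hmat W l u m k.+1))) 0 0.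
  by rewrite -[in RHS]addrA [in RHS]mulmxDr [in RHS]mulmxA [in RHS]mxE.
rewrite [X in _ <= X]mxE [X in X <= _]mxE; apply: ler_sum => r _.
rewrite rowD //.
have -> : phi W b x k.+1 r 0 = Num.max (preact W b x k.+1 r 0) 0 by rewrite /= mxE.
have -> : (W k.+1 *m phi W b x k + b k.+1 - col j (Hmat W l u m k.+1)) r 0
   = preact W b x k.+1 r 0 - col j (Hmat W l u m k.+1) r 0 by rewrite /preact !mxE.
have -> : col j (Hmat W l u m k.+1) r 0 = if in_I l u r && ((c *m Dmat l u k.+1) 0 r < 0) then l k.+1 r 0 else 0.
  have eA : Amat W l u m k.+1 j r = (c *m Dmat l u k.+1) 0 r.
    by rewrite -ha [RHS]mxE.
  by rewrite mxE /Hmat mxE eA.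
rewrite rowD //.
have [h1 h2] := andP (Hb (k.+1) hk r).
exact: pt_lo.
Qed.

Lemma rowmx00 p q (A : 'M[R]_(n m, p)) (v : 'M[R]_(p, q)) (i : 'I_q) : (row j A *m v) 0 i = (A *m v) j i.
Proof. by rewrite -row_mul [LHS]mxE. Qed.

Lemma main_up d : (0 < m)%N -> (d < m)%N ->
 net W b m x j 0 <= (row j (W m *m Pchain W l u (m.-1 - d) m.-1) *m phi W b x (m.-1 - d)) 0 0 + b m j 0
   + \sum_((m.-1 - d).+1 <= i < m) (row j (Amat W l u m i) *m (b i - col j (Tmat W l u m i))) 0 0.
Proof.
move=> m0; elim: d => [|d IH] hd.
  rewrite subn0 Pchain_id mulmx1 prednK // big_geq // addr0 rowmx00.
  by rewrite /net mxE.
have hd' : (d < m)%N by apply: ltn_trans hd.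
have := IH hd'.
have e : (m.-1 - d = (m.-1 - d.+1).+1)%N by lia.
rewrite e => IH'.
have hk : ((m.-1 - d.+1).+1 < m)%N by lia.
rewrite big_ltn //.
have := step_up _ hk.
lra.
Qed.


Lemma main_lo d : (0 < m)%N -> (d < m)%N ->
 (row j (W m *m Pchain W l u (m.-1 - d) m.-1) *m phi W b x (m.-1 - d)) 0 0 + b m j 0
   + \sum_((m.-1 - d).+1 <= i < m) (row j (Amat W l u m i) *m (b i - col j (Hmat W l u m i))) 0 0 <= net W b m x j 0.
Proof.
move=> m0; elim: d => [|d IH] hd.
  rewrite subn0 Pchain_id mulmx1 prednK // big_geq // addr0 rowmx00.
  by rewrite /net [X in _ <= X]mxE.
have hd' : (d < m)%N by apply: ltn_trans hd.
have := IH hd'.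
have e : (m.-1 - d = (m.-1 - d.+1).+1)%N by lia.
rewrite e => IH'.
have hk : ((m.-1 - d.+1).+1 < m)%N by lia.
rewrite big_ltn //.
have := step_lo _ hk.
lra.
Qed.
Lemma Dmat0 : Dmat l u 0 = 1%:M.
Proof. by apply/matrixP => r s; rewrite !mxE; case: (r == s).
Qed.

End S.

Theorem theorem3p5 (R : realType) (m : nat) (n : nat -> nat)
  (W : forall k : nat, 'M[R]_(n k, n k.-1)) (b : forall k : nat, 'cV[R]_(n k))
  (x0 : 'cV[R]_(n 0%N)) (p : \bar R) (eps : R)
  (l u : forall k : nat, 'cV[R]_(n k)) :
  (0 < m)%N -> (1 <= p)%E -> 0 < eps ->
  (forall k : nat, (0 < k < m)%N -> forall r : 'I_(n k),
     l k r 0 <= u k r 0 /\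
     (forall x : 'cV[R]_(n 0%N), lpnorm p (x - x0) <= eps ->
        l k r 0 <= preact W b x k r 0 <= u k r 0)) ->
  forall (j : 'I_(n m)) (x : 'cV[R]_(n 0%N)), lpnorm p (x - x0) <= eps ->
    fL W b l u j x <= net W b m x j 0 <= fU W b l u j x.
Proof.
move=> m0 _ _ H j x hx.
have Hb : forall k, (0 < k < m)%N -> forall r : 'I_(n k),
  l k r 0 <= preact W b x k r 0 <= u k r 0.
  by move=> k hk r; case: (H k hk r) => _; apply.
have hd : (m.-1 < m)%N by rewrite prednK.
have hu := @main_up R n W l u b m x j Hb _ m0 hd.
have hl := @main_lo R n W l u b m x j Hb _ m0 hd.
rewrite subnn in hu hl.
rewrite /fL /fU /Amat Dmat0 !mulmx1.
by rewrite hu hl.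
Qed.
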